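(* Let $A$ be a sub-tree of $T$ with sub-trees $A_0,\dots,A_m$ as in the context. For $i=0,\dots,m$ let $S_i^*$ be the inclusion-maximal set among the maximizers of $G(S,d(r_A))$ over $S\subseteq V_{A_i}$ (i.e. the maximal optimal set of $f_{A_i}$ at $x=d(r_A)$, which lies in its domain $[0,d(r_{A_i})]$). Then the inclusion-maximal optimal set of $f_A$ at $x=d(r_A)$, which is the largest element of the matryoshka $\mathcal{M}_A$, equals $S_0^*\cup S_1^*\cup\dots\cup S_m^*$.
   Context: Setting. $T$ is a finite tree rooted at $r_T$, node set $V_T$; every edge $e$ has weight $w_e\ge 0$. Every node $v$ has a probability $\pi_v\in(0,1]$ and a prize $p_v\in\mathbb{R}$. $d(v)$ is the total weight of the path from $r_T$ to $v$. A random set $\omega\subseteq V_T$ contains each node $v$ independently with probability $\pi_v$. For $S\subseteq V_T$, $P(S)=1-\prod_{s\in S}(1-\pi_s)$ ($P(\emptyset)=0$). For a node $a$, the sub-tree $A$ rooted at $r_A=a$ consists of $a$ and all its descendants, with node set $V_A$; if $a$ has children $c_1,\dots,c_m$, then $A_i$ ($1\le i\le m$) is the sub-tree rooted at $c_i$, $A_0$ is the sub-tree consisting of the single node $r_A$, $\mathcal{I}_A=\{0,1,\dots,m\}$, and $V_A^I=\bigcup_{i\in I}V_{A_i}$ for $I\subseteq\mathcal{I}_A$. For $Q\subseteq V_T$, $W(Q)$ is the total weight of the edges lying on at least one path from $r_T$ to a node of $Q$. For $S\subseteq V_A$ and $x\le d(r_A)$ the expected profit is $G(S,x)=\sum_{s\in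 S}p_s\pi_s-\mathbb{E}[W(S\cap\omega)]+x\,P(S)$. Characteristic function. For a sub-tree $A$, $I\subseteq\mathcal{I}_A$ and $x\in[0,d(r_A)]$, $f_A^I(x)=\max_{S\subseteq V_A^I}G(S,x)$, and $f_A=f_A^{\mathcal{I}_A}$. A set $S\subseteq V_A^I$ with $G(S,x)=f_A^I(x)$ is an optimal set (for $f_A^I$) at $x$. The matryoshka $\mathcal{M}_A^I$ is the family of all $S\subseteq V_A^I$ such that for some $x\in[0,d(r_A)]$, $S$ is an optimal set at $x$ and no proper superset of $S$ contained in $V_A^I$ is optimal at $x$; $\mathcal{M}_A=\mathcal{M}_A^{\mathcal{I}_A}$. *)

(* Defs.v *)
From mathcomp Require Import all_boot all_order all_algebra.
Set Implicit Arguments. Unset Strict Implicit. Unset Printing Implicit Defensive.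
Import Order.TTheory GRing.Theory Num.Theory.
Local Open Scope ring_scope.

Section Tree.
Variables (R : realFieldType) (V : finType) (par : V -> V) (r : V).

(* The edge
   between [v <> r] and [par v] carries weight [w v]. *)
Definition is_tree : Prop :=
  par r = r /\ forall v : V, connect (frel par) v r.

Definition subtree (a : V) : {set V} := [set u | connect (frel par) u a].

Definition is_child (a c : V) : bool := (par c == a) && (c != r).

(* nodes u <> r on the root-path of v; each stands for the edge (u, par u) *)
Definition path_edges (v : V) : {set V} :=
  [set u | connect (frel par) v u & u != r].

Variables (w pi p : V -> R).

Definition dist (v : V) : R := \sum_(u in path_edges v) w u.

Definition Wt (Q : {set V}) : R :=
  \sum_(u in \bigcup_(q in Q) path_edges q) w u.

Definition prob_omega (om : {set V}) : R :=
  \prod_(v : V) (if v \in om then pi v else 1 - pi v).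

Definition EW (S : {set V}) : R :=
  \sum_(om : {set V}) prob_omega om * Wt (S :&: om).

Definition Pr (S : {set V}) : R := 1 - \prod_(s in S) (1 - pi s).

Definition G (S : {set V}) (x : R) : R :=
  \sum_(s in S) p s * pi s - EW S + x * Pr S.

Definition optimal (D : {set V}) (x : R) (S : {set V}) : Prop :=
  S \subset D /\ forall S' : {set V}, S' \subset D -> G S' x <= G S x.

Definition max_optimal (D : {set V}) (x : R) (S : {set V}) : Prop :=
  optimal D x S /\ forall S' : {set V}, S \proper S' -> S' \subset D -> ~ optimal D x S'.

Definition matryoshka (a : V) (S : {set V}) : Prop :=
  exists x : R, 0 <= x <= dist a /\ max_optimal (subtree a) x S.

End Tree.

(* Main.v *)
Require Import Defs.
From mathcomp Require Import all_boot all_order all_algebra.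
From mathcomp Require Import ring lra.
Set Implicit Arguments. Unset Strict Implicit. Unset Printing Implicit Defensive.
Import Order.TTheory GRing.Theory Num.Theory.
Local Open Scope ring_scope.

Section TreeFacts.
Variables (V : finType) (par : V -> V) (r : V).
Hypothesis Htree : is_tree par r.

Lemma reachP x y : reflect (exists n, iter n par x = y) (fconnect par x y).
Proof.
apply: (iffP idP) => [H|[n <-]]; last exact: fconnect_iter.
by exists (findex par x y); rewrite iter_findex.
Qed.

Lemma iter_r n : iter n par r = r.
Proof. by elim: n => //= n ->; case: Htree. Qed.

Lemma iter_mul n k x : iter n par x = x -> iter (k * n) par x = x.
Proof. move=> Hx; elim: k => [|k IH] //=; by rewrite mulSn iterD IH Hx. Qed.

Lemma antisym x y : fconnect par x y -> fconnect par y x -> x = y.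
Proof.
move=> /reachP [n Hn] /reachP [m Hm].
have Hx : iter (m + n) par x = x by rewrite iterD Hn.
case: Htree => _ /(_ x) /reachP [M HM].
case: n Hn Hx => [|n] Hn Hx; first by rewrite -Hn.
have xr : x = r.
  have := iter_mul M Hx; rewrite addnS => H; rewrite -H.
  have -> : (M * (m + n).+1 = (M * (m + n).+1 - M) + M)%N by rewrite subnK // leq_pmulr.
  by rewrite iterD HM iter_r.
by move: Hn; rewrite xr iter_r => <-.
Qed.

Lemma fix_r v : par v = v -> v = r.
Proof.
move=> Hv; case: Htree => _ /(_ v) /reachP [n <-].
by elim: n => //= n <-.
Qed.

Lemma comparable q x y : fconnect par q x -> fconnect par q y ->
  fconnect par x y \/ fconnect par y x.
Proof.
move=> /reachP [n <-] /reachP [m <-].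
case: (leqP n m) => H.
  by left; apply/reachP; exists (m - n)%N; rewrite -iterD subnK.
by right; apply/reachP; exists (n - m)%N; rewrite -iterD subnK // ltnW.
Qed.

Lemma step x y : fconnect par x y -> x != y -> fconnect par (par x) y.
Proof.
move=> /reachP [[|n] <-] /=; first by rewrite eqxx.
by move=> _; apply/reachP; exists n; rewrite -iterSr.
Qed.

Variable a : V.

Lemma child_notin c : is_child par r a c -> a \notin subtree par c.
Proof.
case/andP => /eqP Hc cr; rewrite inE; apply/negP => H.
have ac : a = c by apply: antisym => //; rewrite -Hc; apply: connect1; rewrite /= eqxx.
by move: cr; rewrite (fix_r (_ : par c = c)) ?eqxx // Hc.
Qed.

Lemma child_sub c : is_child par r a c -> subtree par c \subset subtree par a.
Proof.
case/andP => /eqP Hc _; apply/subsetP => u; rewrite !inE => H.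
by apply: connect_trans H _; apply: connect1; rewrite /= Hc.
Qed.

Lemma child_disj c c' : is_child par r a c -> is_child par r a c' -> c != c' ->
  forall u, u \in subtree par c -> u \notin subtree par c'.
Proof.
move=> Hc Hc' ne u; rewrite !inE => H1; apply/negP => H2.
wlog : c c' Hc Hc' ne H1 H2 / fconnect par c c'.
  move=> W; case: (comparable H1 H2) => H; first exact: (W c c').
  by apply: (W c' c) => //; rewrite eq_sym.
move=> /step /(_ ne); case/andP: Hc => /eqP -> _ => ac'.
move: (child_notin Hc'); rewrite inE; by rewrite ac'.
Qed.

Lemma sep c q u : is_child par r a c -> q \in subtree par c -> fconnect par q u ->
  u \in subtree par c \/ fconnect par a u.
Proof.
move=> Hc; rewrite inE => Hq Hu; case: (comparable Hq Hu) => H.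
  case: (eqVneq c u) => [<-|ne]; first by left; rewrite inE connect0.
  by right; case/andP: Hc => /eqP <- _; exact: step.
by left; rewrite inE.
Qed.

Lemma decomp u : u \in subtree par a -> u != a ->
  exists2 c, is_child par r a c & u \in subtree par c.
Proof.
rewrite inE => Hu ne.
have ex : exists n, iter n par u == a by case/reachP: Hu => n <-; exists n.
case: (ex_minnP ex) => n /eqP Hn Hmin.
case: n Hn Hmin => [|n] Hn Hmin; first by move: ne; rewrite -Hn eqxx.
exists (iter n par u); last by rewrite inE fconnect_iter.
rewrite /is_child -iterS Hn eqxx /=; apply/negP => /eqP E.
have : iter n par u == a by rewrite -Hn iterS E; case: Htree => -> _.
by move/Hmin; rewrite ltnn.
Qed.

End TreeFacts.

Section Prob.
Variables (R : realFieldType) (V : finType) (pi : V -> R).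
Hypothesis Hpi : forall v : V, 0 < pi v <= 1.

Lemma sum_prod_set (F : V -> bool -> R) :
  \sum_(om : {set V}) \prod_(v : V) F v (v \in om) = \prod_(v : V) (F v true + F v false).
Proof.
transitivity (\prod_(v : V) \sum_(b : bool) F v b); last by apply: eq_bigr => v _; rewrite big_bool.
rewrite bigA_distr_bigA.
rewrite (reindex (fun f : {ffun V -> bool} => [set v | f v])) /=.
  by apply: eq_bigr => f _; apply: eq_bigr => v _; rewrite inE.
apply: onW_bij; exists (fun om : {set V} => [ffun v => v \in om]).
  by move=> f; apply/ffunP => v; rewrite ffunE inE.
by move=> om; apply/setP => v; rewrite inE ffunE.
Qed.

Lemma prob_ge0 om : 0 <= prob_omega pi om.
Proof.
apply: prodr_ge0 => v _; case: (v \in om); have /andP[h1 h2] := Hpi v.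
  exact: ltW. by rewrite subr_ge0.
Qed.

Lemma sum_prob : \sum_om prob_omega pi om = 1.
Proof.
rewrite /prob_omega.
rewrite (_ : \sum_(om : {set V}) \prod_(v : V) (if v \in om then pi v else 1 - pi v) = \prod_(v : V) ((fun v b => if b then pi v else 1 - pi v) v true + (fun v b => if b then pi v else 1 - pi v) v false)); last exact: (sum_prod_set (fun v b => if b then pi v else 1 - pi v)).
by rewrite big1 // => v _; rewrite addrC subrK.
Qed.

Lemma sum_prob_empty S :
  \sum_om prob_omega pi om * (S :&: om == set0)%:R = \prod_(s in S) (1 - pi s).
Proof.
transitivity (\sum_(om : {set V}) \prod_(v : V)
   (fun v b => if b then (if v \in S then 0 else pi v) else 1 - pi v) v (v \in om)).
  apply: eq_bigr => om _ /=; rewrite /prob_omega.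
  case: eqP => [E|/eqP NE].
    rewrite mulr1; apply: eq_bigr => v _; case Ho: (v \in om) => //.
    case Hs: (v \in S) => //; move/setP: E => /(_ v); by rewrite !inE Hs Ho.
  rewrite mulr0; case/set0Pn: NE => v; rewrite inE => /andP[Hs Ho].
  by rewrite (bigD1 v) //= Ho Hs mul0r.
rewrite (sum_prod_set (fun v b => if b then (if v \in S then 0 else pi v) else 1 - pi v)) [RHS]big_mkcond /=; apply: eq_bigr => v _.
by case: (v \in S); rewrite ?add0r // addrC subrK.
Qed.

Lemma Pr_exp S :
  Pr pi S = \sum_om prob_omega pi om * (S :&: om != set0)%:R.
Proof.
rewrite /Pr -sum_prob_empty.
have -> : \sum_om prob_omega pi om * (S :&: om != set0)%:R =
   \sum_om prob_omega pi om - \sum_om prob_omega pi om * (S :&: om == set0)%:R.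
  rewrite -sumrB; apply: eq_bigr => om _.
  by case: eqP => _; rewrite ?mulr1 ?mulr0 ?subr0 ?subrr.
by rewrite sum_prob.
Qed.

End Prob.

Section Core.
Variables (R : realFieldType) (V : finType) (par : V -> V) (r : V) (w : V -> R) (a : V).
Hypothesis Hw : forall v, 0 <= w v.

Local Notation C Q := (\bigcup_(q in Q) path_edges par r q).
Local Notation NN Q := ((Q != set0)%:R : R).
Local Notation D := (subtree par a).
Local Notation d := (dist par r w a).
Local Notation pe := (path_edges par r).
Local Notation Wt := (Wt par r w).

Lemma Wt_sum (Q : {set V}) : Wt Q = \sum_u (u \in C Q)%:R * w u.
Proof. by rewrite /Defs.Wt big_mkcond; apply: eq_bigr => u _; case: (_ \in _); rewrite ?mul1r ?mul0r. Qed.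

Lemma d_sum : d = \sum_u (u \in pe a)%:R * w u.
Proof. by rewrite /dist big_mkcond; apply: eq_bigr => u _; case: (_ \in _); rewrite ?mul1r ?mul0r. Qed.

Lemma peC u (Q : {set V}) : Q \subset D -> u \in pe a -> (u \in C Q) = (Q != set0).
Proof.
move=> HQ Hu; apply/bigcupP/set0Pn => [[q Hq _]|[q Hq]]; first by exists q.
exists q => //; move: Hu; rewrite !inE => /andP[H1 H2]; rewrite H2 andbT.
by move/subsetP: HQ => /(_ q Hq); rewrite inE => H; apply: connect_trans H H1.
Qed.

Lemma C_U u (A B : {set V}) : (u \in C (A :|: B)) = (u \in C A) || (u \in C B).
Proof. by rewrite bigcup_setU inE. Qed.

Lemma C_I u (A B : {set V}) : u \in C (A :&: B) -> (u \in C A) && (u \in C B).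
Proof.
case/bigcupP => q; rewrite inE => /andP[qA qB] H.
by apply/andP; split; apply/bigcupP; exists q.
Qed.

Definition Dl u (A B : {set V}) : R :=
  (u \in C (A :|: B))%:R + (u \in C (A :&: B))%:R - (u \in C A)%:R - (u \in C B)%:R.
Definition DN (A B : {set V}) : R := NN (A :|: B) + NN (A :&: B) - NN A - NN B.

Lemma Dl_le0 u (A B : {set V}) : Dl u A B <= 0.
Proof.
rewrite /Dl C_U; case H: (u \in C (A :&: B)).
  by case/andP: (C_I H) => -> ->; rewrite /= ?(mulr1n, mulr0n); lra.
by case: (u \in C A); case: (u \in C B); rewrite /= ?(mulr1n, mulr0n); lra.
Qed.

Lemma DN_le0 (A B : {set V}) : DN A B <= 0.
Proof.
rewrite /DN; case: (eqVneq A set0) => [->|nA].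
  by rewrite set0U set0I eqxx /= ?(mulr1n, mulr0n); lra.
case: (eqVneq B set0) => [->|nB].
  by rewrite setU0 setI0 eqxx /= ?nA /= ?(mulr1n, mulr0n); lra.
have : A :|: B != set0.
  by apply: contraNneq nA => E; apply/eqP; apply/setP => x; move/setP: E => /(_ x); rewrite !inE; case: (x \in A).
move=> ->; case: (_ != _); rewrite /= ?(mulr1n, mulr0n); lra.
Qed.

Lemma Wt_diff (A B : {set V}) : Wt (A :|: B) + Wt (A :&: B) - Wt A - Wt B = \sum_u w u * Dl u A B.
Proof.
rewrite !Wt_sum -!big_split -!sumrB /=; apply: eq_bigr => u _; rewrite /Dl; ring.
Qed.

Lemma Dl_pe u (A B : {set V}) : A \subset D -> B \subset D -> u \in pe a -> Dl u A B = DN A B.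
Proof.
move=> HA HB Hu.
have HU : A :|: B \subset D by rewrite subUset HA HB.
have HI : A :&: B \subset D by apply: subset_trans HA; apply: subsetIl.
by rewrite /Dl /DN (peC HU Hu) (peC HI Hu) (peC HA Hu) (peC HB Hu).
Qed.

Lemma Wdiff_le (A B : {set V}) x : A \subset D -> B \subset D -> x <= d ->
  Wt (A :|: B) + Wt (A :&: B) - Wt A - Wt B - x * DN A B <= 0.
Proof.
move=> HA HB Hx; rewrite Wt_diff.
have : \sum_u w u * Dl u A B <= d * DN A B.
  rewrite d_sum mulr_suml; apply: ler_sum => u _.
  case Hu: (u \in pe a); first by rewrite (Dl_pe HA HB Hu) mul1r.
  by rewrite mul0r mul0r; apply: mulr_ge0_le0 => //; exact: Dl_le0.
have := DN_le0 A B; have : 0 <= d - x by rewrite subr_ge0.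
move=> h1 h2 h3; have := mulr_ge0_le0 h1 h2; lra.
Qed.

Lemma Wdiff_eq (A B : {set V}) : A \subset D -> B \subset D ->
  (forall u, u \in C A -> u \in C B -> u \in pe a) ->
  Wt (A :|: B) + Wt (A :&: B) - Wt A - Wt B - d * DN A B = 0.
Proof.
move=> HA HB Hs; rewrite Wt_diff d_sum mulr_suml -sumrB big1 // => u _.
case Hu: (u \in pe a); first by rewrite (Dl_pe HA HB Hu) mul1r subrr.
rewrite mul0r mul0r subr0 /Dl C_U.
case HI: (u \in C (A :&: B)).
  by case/andP: (C_I HI) => h1 h2; move: (Hs u h1 h2); rewrite Hu.
case hA: (u \in C A); case hB: (u \in C B) => /=.
- by move: (Hs u hA hB); rewrite Hu.
all: rewrite /=; ring.
Qed.

End Core.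
Arguments DN {R V} A B.

Section GG.
Variables (R : realFieldType) (V : finType) (par : V -> V) (r : V) (w pi p : V -> R) (a : V).
Hypothesis Hw : forall v, 0 <= w v.
Hypothesis Hpi : forall v : V, 0 < pi v <= 1.

Local Notation C Q := (\bigcup_(q in Q) path_edges par r q).
Local Notation NN Q := ((Q != set0)%:R : R).
Local Notation D := (subtree par a).
Local Notation d := (dist par r w a).
Local Notation pe := (path_edges par r).
Local Notation Wt := (Wt par r w).
Local Notation G := (G par r w pi p).
Local Notation P := (prob_omega pi).

Lemma G_alt (S : {set V}) x : G S x = \sum_(s in S) p s * pi s
   - \sum_om P om * (Wt (S :&: om) - x * NN (S :&: om)).
Proof.
rewrite /G /EW Pr_exp.
have -> : \sum_om P om * (Wt (S :&: om) - x * NN (S :&: om)) =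
   \sum_om P om * Wt (S :&: om) - x * \sum_om P om * NN (S :&: om).
  by rewrite mulr_sumr -sumrB; apply: eq_bigr => om _; ring.
ring.
Qed.

Lemma sumU (f : V -> R) (A B : {set V}) :
  \sum_(s in A :|: B) f s + \sum_(s in A :&: B) f s = \sum_(s in A) f s + \sum_(s in B) f s.
Proof.
rewrite !(big_mkcond (fun s => s \in _)) -!big_split; apply: eq_bigr => s _.
by rewrite !inE; case: (s \in A); case: (s \in B); rewrite /= ?addr0 ?add0r.
Qed.

Lemma setIIom (A B om : {set V}) : A :&: B :&: om = (A :&: om) :&: (B :&: om).
Proof. by apply/setP => x; rewrite !inE; case: (x \in A); case: (x \in B); case: (x \in om). Qed.

Lemma G_diff (A B : {set V}) x :
  G (A :|: B) x + G (A :&: B) x - G A x - G B x =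
  - \sum_om P om * (Wt ((A :&: om) :|: (B :&: om)) + Wt ((A :&: om) :&: (B :&: om))
       - Wt (A :&: om) - Wt (B :&: om) - x * DN (A :&: om) (B :&: om)).
Proof.
rewrite !G_alt.
have E : \sum_om P om * (Wt ((A :|: B) :&: om) - x * NN ((A :|: B) :&: om))
   + \sum_om P om * (Wt ((A :&: B) :&: om) - x * NN ((A :&: B) :&: om))
   - \sum_om P om * (Wt (A :&: om) - x * NN (A :&: om))
   - \sum_om P om * (Wt (B :&: om) - x * NN (B :&: om)) =
   \sum_om P om * (Wt ((A :&: om) :|: (B :&: om)) + Wt ((A :&: om) :&: (B :&: om))
       - Wt (A :&: om) - Wt (B :&: om) - x * DN (A :&: om) (B :&: om)).
  rewrite -big_split -!sumrB; apply: eq_bigr => om _.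
  rewrite setIUl setIIom /DN; rewrite /=; ring.
have := sumU (fun s => p s * pi s) A B; lra.
Qed.

Lemma G_super (A B : {set V}) x : A \subset D -> B \subset D -> x <= d ->
  G A x + G B x <= G (A :|: B) x + G (A :&: B) x.
Proof.
move=> HA HB Hx.
suff : 0 <= G (A :|: B) x + G (A :&: B) x - G A x - G B x by lra.
rewrite G_diff oppr_ge0; apply: sumr_le0 => om _.
apply: mulr_ge0_le0; first exact: prob_ge0.
apply: (Wdiff_le (a:=a) Hw) => //; [exact: subset_trans (subsetIl _ _) HA | exact: subset_trans (subsetIl _ _) HB].
Qed.

Lemma C_sub (A B : {set V}) u : A \subset B -> u \in C A -> u \in C B.
Proof. by move=> /subsetP H /bigcupP [q /H qB Hu]; apply/bigcupP; exists q. Qed.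

Lemma G_add (A B : {set V}) : A \subset D -> B \subset D ->
  (forall u, u \in C A -> u \in C B -> u \in pe a) ->
  G (A :|: B) d + G (A :&: B) d = G A d + G B d.
Proof.
move=> HA HB Hs.
suff : G (A :|: B) d + G (A :&: B) d - G A d - G B d = 0 by lra.
rewrite G_diff big1 ?oppr0 // => om _.
rewrite (@Wdiff_eq _ _ _ _ w a) ?mulr0 //.
- exact: subset_trans (subsetIl _ _) HA.
- exact: subset_trans (subsetIl _ _) HB.
move=> u h1 h2; apply: Hs; [exact: C_sub (subsetIl _ _) h1 | exact: C_sub (subsetIl _ _) h2].
Qed.

Lemma G0 x : G set0 x = 0.
Proof.
have W0 : forall om : {set V}, Wt (set0 :&: om) = 0.
  move=> om; rewrite set0I /Defs.Wt.
  have -> : \bigcup_(q in set0) path_edges par r q = set0 :> {set V} by rewrite big_set0.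
  by rewrite big_set0.
rewrite /G /EW /Pr.
have -> : \sum_om P om * Wt (set0 :&: om) = 0 by apply: big1 => om _; rewrite W0 mulr0.
rewrite !big_set0; lra.
Qed.

Lemma Pr_mono (S U : {set V}) : Pr pi U <= Pr pi (S :|: U).
Proof.
rewrite !Pr_exp; apply: ler_sum => om _; apply: ler_wpM2l; first exact: prob_ge0.
case: (boolP (U :&: om != set0)) => [|_]; last by rewrite ler0n.
case/set0Pn => v; rewrite inE => /andP[h1 h2].
have : (S :|: U) :&: om != set0 by apply/set0Pn; exists v; rewrite !inE h1 h2 orbT.
by move=> ->.
Qed.

End GG.

Section Main.
Variables (R : realFieldType) (V : finType) (par : V -> V) (r : V) (w pi p : V -> R) (a : V).
Hypothesis Htree : is_tree par r.
Hypothesis Hw : forall v, 0 <= w v.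
Hypothesis Hpi : forall v : V, 0 < pi v <= 1.

Local Notation C Q := (\bigcup_(q in Q) path_edges par r q).
Local Notation D := (subtree par a).
Local Notation d := (dist par r w a).
Local Notation pe := (path_edges par r).
Local Notation G := (G par r w pi p).
Local Notation child := (is_child par r a).

Lemma a_in : a \in D.
Proof. by rewrite inE connect0. Qed.

Lemma add_seq (s : seq V) (A0 : {set V}) (A : V -> {set V}) :
  uniq s -> all child s -> A0 \subset [set a] ->
  (forall c, c \in s -> A c \subset subtree par c) ->
  G (A0 :|: \bigcup_(c <- s) A c) d = G A0 d + \sum_(c <- s) G (A c) d.
Proof.
elim: s => [|c s IH] /=.
  by move=> _ _ _ _; rewrite !big_nil setU0 addr0.
case/andP => cs us /andP[ch alls] HA0 HA.
rewrite !big_cons setUCA.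
have HAc : A c \subset subtree par c by apply: HA; rewrite inE eqxx.
have HA' : forall c', c' \in s -> A c' \subset subtree par c'.
  by move=> c' h; apply: HA; rewrite inE h orbT.
have Hnot : forall q, q \in A0 :|: \bigcup_(c0 <- s) A c0 -> q \notin subtree par c.
  move=> q; rewrite inE bigcup_seq => /orP[qa|/bigcupP[c' c's qc']].
    by move/subsetP: HA0 => /(_ q qa); rewrite inE => /eqP ->; exact: (child_notin Htree ch).
  have ne : c' != c by apply: contraNneq cs => <-.
  have ch' : child c' by move/allP: alls => /(_ c' c's).
  by apply: (child_disj Htree ch' ch ne); move/subsetP: (HA' c' c's); apply.
have HY : A0 :|: \bigcup_(c0 <- s) A c0 \subset D.
  apply/subsetP => q; rewrite inE bigcup_seq => /orP[qa|/bigcupP[c' c's qc']].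
    by move/subsetP: HA0 => /(_ q qa); rewrite inE => /eqP ->; apply: a_in.
  have ch' : child c' by move/allP: alls => /(_ c' c's).
  by apply/(subsetP (child_sub ch')); move/subsetP: (HA' c' c's); apply.
have HAcD : A c \subset D by apply: subset_trans HAc (child_sub ch).
have := @G_add _ _ par r w pi p a _ _ HAcD HY.
have -> : A c :&: (A0 :|: \bigcup_(c0 <- s) A c0) = set0.
  apply/setP => q; rewrite in_set0 in_setI; apply/negP => /andP[h1 h2].
  by move: (Hnot q h2); rewrite (subsetP HAc q h1).
rewrite G0 addr0 => ->.
- by rewrite IH //; ring.
move=> u /bigcupP [q qA]; rewrite inE => /andP[qu ur] /bigcupP [q' q'Y]; rewrite inE => /andP[q'u _].
case: (sep ch (subsetP HAc q qA) qu) => [uc|au]; last by rewrite inE au ur.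
have : q' \in subtree par c by rewrite inE; apply: connect_trans q'u _; rewrite inE in uc.
by rewrite (negbTE (Hnot q' q'Y)).
Qed.


Lemma G_shift (S : {set V}) x y : G S y = G S x + (y - x) * Pr pi S.
Proof. rewrite /Defs.G; ring. Qed.

Variables (S0 : {set V}) (Sc : V -> {set V}).
Hypothesis H0 : max_optimal par r w pi p [set a] d S0.
Hypothesis Hc : forall c : V, child c -> max_optimal par r w pi p (subtree par c) d (Sc c).

Let sq := [seq c <- index_enum V | child c].
Let U := S0 :|: \bigcup_(c | child c) Sc c.

Lemma U_seq : U = S0 :|: \bigcup_(c <- sq) Sc c.
Proof. by rewrite /U /sq big_filter. Qed.

Lemma sq_uniq : uniq sq.
Proof. by rewrite filter_uniq // index_enum_uniq. Qed.

Lemma sq_all : all child sq.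
Proof. exact: filter_all. Qed.

Lemma mem_sq c : (c \in sq) = child c.
Proof. by rewrite mem_filter mem_index_enum andbT. Qed.

Lemma S0a : S0 \subset [set a].
Proof. by case: H0 => [[]]. Qed.

Lemma Scc c : child c -> Sc c \subset subtree par c.
Proof. by case/Hc => [[]]. Qed.

Lemma sqS c : c \in sq -> Sc c \subset subtree par c.
Proof. by rewrite mem_sq; apply: Scc. Qed.

Lemma decompS (S' : {set V}) : S' \subset D ->
  S' = (S' :&: [set a]) :|: \bigcup_(c <- sq) (S' :&: subtree par c).
Proof.
move=> HS; apply/setP => x; apply/idP/idP; last first.
  rewrite in_setU bigcup_seq => /orP[|/bigcupP[c _]]; rewrite inE => /andP[] //.
move=> xS; rewrite in_setU; case: (eqVneq x a) => [<-|ne].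
  by rewrite in_setI in_set1 eqxx xS.
have [c ch xc] := decomp Htree (subsetP HS x xS) ne.
by apply/orP; right; rewrite bigcup_seq; apply/bigcupP; exists c; rewrite ?mem_sq // inE xS.
Qed.

Lemma GS_decomp (S' : {set V}) : S' \subset D ->
  G S' d = G (S' :&: [set a]) d + \sum_(c <- sq) G (S' :&: subtree par c) d.
Proof.
move=> HS; rewrite {1}(decompS HS) add_seq //; [exact: sq_uniq | exact: sq_all | exact: subsetIr |].
by move=> c _; exact: subsetIr.
Qed.

Lemma GU : G U d = G S0 d + \sum_(c <- sq) G (Sc c) d.
Proof. by rewrite U_seq add_seq //; [exact: sq_uniq | exact: sq_all | exact: S0a | exact: sqS]. Qed.

Lemma U_sub : U \subset D.
Proof.
rewrite /U subUset; apply/andP; split.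
  by apply: subset_trans S0a _; rewrite sub1set a_in.
apply/subsetP => x /bigcupP [c ch xc].
exact: (subsetP (child_sub ch)) (subsetP (Scc ch) x xc).
Qed.

Lemma U_opt : optimal par r w pi p D d U.
Proof.
split; first exact: U_sub.
move=> S' HS; rewrite GS_decomp // GU; apply: lerD.
  by case: H0 => [[_ H] _]; apply: H; exact: subsetIr.
rewrite big_seq_cond [X in _ <= X]big_seq_cond; apply: ler_sum => c; rewrite andbT mem_sq => ch.
by case: (Hc ch) => [[_ H] _]; apply: H; exact: subsetIr.
Qed.

Lemma U_max : forall S' : {set V}, U \proper S' -> S' \subset D -> ~ optimal par r w pi p D d S'.
Proof.
move=> S' PU HS [_ Hopt].
have GeqU : G S' d = G U d.
  by apply/le_anti/andP; split; [case: U_opt => _; apply | apply: Hopt; exact: U_sub].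
case/properP: PU => sub [x xS xU].
have t0ge : G (S' :&: [set a]) d <= G S0 d.
  by case: H0 => [[_ H] _]; apply: H; exact: subsetIr.
have tcge : forall c, child c -> 0 <= G (Sc c) d - G (S' :&: subtree par c) d.
  by move=> c ch; rewrite subr_ge0; case: (Hc ch) => [[_ H] _]; apply: H; exact: subsetIr.
have Esum : (G S0 d - G (S' :&: [set a]) d) +
     \sum_(c | child c) (G (Sc c) d - G (S' :&: subtree par c) d) = 0.
  have E1 : \sum_(c | child c) (G (Sc c) d - G (S' :&: subtree par c) d) =
     \sum_(c <- sq) G (Sc c) d - \sum_(c <- sq) G (S' :&: subtree par c) d.
    by rewrite /sq !big_filter sumrB.
  rewrite E1; move: GeqU; rewrite GS_decomp // GU => E2.
  set a1 := G S0 d in E2 *; set a2 := G (S' :&: [set a]) d in E2 *.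
  set b1 := \sum_(c <- sq) G (Sc c) d in E2 *.
  set b2 := \sum_(c <- sq) G (S' :&: subtree par c) d in E2 *.
  lra.
have Ssum : 0 <= \sum_(c | child c) (G (Sc c) d - G (S' :&: subtree par c) d).
  by apply: sumr_ge0.
have t0 : G (S' :&: [set a]) d = G S0 d by lra.
have tc : \sum_(c | child c) (G (Sc c) d - G (S' :&: subtree par c) d) = 0 by lra.
have S0U : S0 \subset U by rewrite /U subsetUl.
case: (eqVneq x a) => [xa|ne].
  case: H0 => [[_ Hopt0] Hmax0]; apply: (Hmax0 (S' :&: [set a])).
  - apply/properP; split.
      by rewrite subsetI (subset_trans S0U sub) S0a.
    exists x; first by rewrite in_setI xS in_set1 xa eqxx.
    by apply: contra xU; apply: (subsetP S0U).
  - exact: subsetIr.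
  split; first exact: subsetIr.
  by move=> S'' H''; rewrite t0; apply: Hopt0.
have [c ch xc] := decomp Htree (subsetP HS x xS) ne.
have tc0 := psumr_eq0P tcge tc ch.
have EE : G (S' :&: subtree par c) d = G (Sc c) d by lra.
case: (Hc ch) => [[_ Hoptc] Hmaxc]; apply: (Hmaxc (S' :&: subtree par c)).
- apply/properP; split.
    rewrite subsetI (Scc ch) andbT; apply: subset_trans sub.
    by apply/subsetP => y yc; rewrite /U inE; apply/orP; right; apply/bigcupP; exists c.
  exists x; first by rewrite in_setI xS xc.
  apply: contra xU => xSc; rewrite /U inE; apply/orP; right; apply/bigcupP; exists c => //.
- exact: subsetIr.
split; first exact: subsetIr.
by move=> S'' H''; rewrite EE; apply: Hoptc.
Qed.

Lemma U_largest (S : {set V}) : matryoshka par r w pi p a S -> S \subset U.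
Proof.
case=> x [/andP[x0 xd] [[SD Sopt] _]].
have sup := @G_super _ _ par r w pi p a Hw Hpi _ _ _ SD U_sub xd.
have h1 : G (S :&: U) x <= G S x.
  by apply: Sopt; apply: subset_trans (subsetIl _ _) SD.
have h2 := Pr_mono Hpi S U.
have h3 : (d - x) * Pr pi U <= (d - x) * Pr pi (S :|: U).
  by apply: ler_wpM2l => //; rewrite subr_ge0.
have SUD : S :|: U \subset D by rewrite subUset SD U_sub.
have opt : optimal par r w pi p D d (S :|: U).
  split => // S'' H''; apply: le_trans (_ : G U d <= _).
    by case: U_opt => _; apply.
  rewrite (G_shift U x d) (G_shift (S :|: U) x d); lra.
have : ~~ (U \proper (S :|: U)) by apply/negP => P; exact: (U_max P SUD opt).
rewrite properEneq subsetUr andbT negbK => /eqP ->; exact: subsetUl.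
Qed.

Lemma d_ge0 : 0 <= d.
Proof. by apply: sumr_ge0 => u _. Qed.

Lemma main_res :
  max_optimal par r w pi p D d U /\ matryoshka par r w pi p a U /\
  (forall S : {set V}, matryoshka par r w pi p a S -> S \subset U).
Proof.
have mo : max_optimal par r w pi p D d U by split; [exact: U_opt | exact: U_max].
split => //; split; last exact: U_largest.
by exists d; split => //; rewrite d_ge0 lexx.
Qed.

End Main.

Theorem proposition8 (R : realFieldType) (V : finType) (par : V -> V) (r : V)
    (w pi p : V -> R)
    (Htree : is_tree par r)
    (Hw : forall v : V, 0 <= w v)
    (Hpi : forall v : V, 0 < pi v <= 1)
    (a : V) (S0 : {set V}) (Sc : V -> {set V})
    (H0 : max_optimal par r w pi p [set a] (dist par r w a) S0)
    (Hc : forall c : V, is_child par r a c ->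
            max_optimal par r w pi p (subtree par c) (dist par r w a) (Sc c)) :
  max_optimal par r w pi p (subtree par a) (dist par r w a)
              (S0 :|: \bigcup_(c | is_child par r a c) Sc c)
  /\ matryoshka par r w pi p a (S0 :|: \bigcup_(c | is_child par r a c) Sc c)
  /\ (forall S : {set V}, matryoshka par r w pi p a S ->
        S \subset S0 :|: \bigcup_(c | is_child par r a c) Sc c).
Proof.
exact: (main_res Htree Hw Hpi H0 Hc).
Qed.
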